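(* Let $G$ be a group with finite generating set $S$. If the Cayley graph $Cay(G,S)$ is $\delta$-hyperbolic, then $G$ is $[4\delta+2,\,4\delta+3]$-chordal with respect to $S$.
   Context: $S^{\pm1}=S\cup S^{-1}\setminus\{e\}$; $Cay(G,S)$ has vertex set $G$, edges $\{g,gs\}$ ($s\in S^{\pm1}$), each edge isometric to $[0,1]$, with the path-length metric. A geodesic metric space is $\delta$-hyperbolic if every geodesic triangle is $\delta$-thin: each side lies in the closed $\delta$-neighborhood of the union of the other two sides. A relation $s_1\cdots s_n=e$ with $n>2$, $s_i\in S^{\pm1}$, is simple if $s_p\cdots s_q=e$ holds exactly when $(p,q)=(1,n)$. $G$ is $[i_0,k]$-chordal with respect to $S$ if for every simple relation $s_1\cdots s_n=e$ with $n\ge k$ there exist $1\le i\le i_0$, $i<j\le n$ and $s'_1,\dots,s'_r\in S^{\pm1}$ with $s_i\cdots s_j=s'_1\cdots s'_r$ and $r\le\min\{j-i,\,n-j+i-2\}$. *)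

(* Defs.v *)
From Stdlib Require Import Reals List Arith.
Open Scope R_scope.

Record group := Group {
  carrier :> Type;
  gmul : carrier -> carrier -> carrier;
  ginv : carrier -> carrier;
  gone : carrier;
  gmulA : forall x y z, gmul x (gmul y z) = gmul (gmul x y) z;
  gmul1l : forall x, gmul gone x = x;
  gmul1r : forall x, gmul x gone = x;
  gmulVl : forall x, gmul (ginv x) x = gone;
  gmulVr : forall x, gmul x (ginv x) = gone
}.

Section Cayley.
Variable G : group.
Variable S : list G.

Definition gprod (l : list G) : G := fold_right (gmul G) (gone G) l.

Definition Spm (s : G) : Prop := (In s S \/ In (ginv G s) S) /\ s <> gone G.

Definition generates : Prop :=
  forall g : G, exists l : list G,
    Forall (fun s => In s S \/ In (ginv G s) S) l /\ gprod l = g.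

Definition wdist (x y : G) (n : nat) : Prop :=
  (exists l, length l = n /\ Forall Spm l /\ gmul G x (gprod l) = y) /\
  (forall l, Forall Spm l -> gmul G x (gprod l) = y -> (n <= length l)%nat).

(* Points of the metric Cayley graph: a vertex, or an interior point of the
   edge {a,b} (with a^{-1} b in S^{+-1}) at distance t from a, 0<t<1.  The
   interior point E a b t is the same point as E b a (1-t). *)
Inductive pt := V (g : G) | E (a b : G) (t : R).

Definition valid (p : pt) : Prop :=
  match p with
  | V _ => True
  | E a b t => Spm (gmul G (ginv G a) b) /\ 0 < t < 1
  end.

(* x is an endpoint of the (closed) cell carrying p, at distance al from p
   along that cell *)
Definition endp (p : pt) (x : G) (al : R) : Prop :=
  match p with
  | V g => x = g /\ al = 0
  | E a b t => (x = a /\ al = t) \/ (x = b /\ al = 1 - t)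
  end.

(* candidate path lengths from p to q: inside a common edge, or
   p -> endpoint x -> geodesic vertex path -> endpoint y -> q *)
Definition cand (p q : pt) (c : R) : Prop :=
  (exists a b t a' b' u, p = E a b t /\ q = E a' b' u /\
     ((a = a' /\ b = b' /\ c = Rabs (t - u)) \/
      (a = b' /\ b = a' /\ c = Rabs (t - (1 - u))))) \/
  (exists x al y be n, endp p x al /\ endp q y be /\ wdist x y n /\
     c = al + INR n + be).

(* path-length metric of the Cayley graph (unit edges): pdist p q r means
   d(p,q) = r (the shortest of the finitely many candidate lengths) *)
Definition pdist (p q : pt) (r : R) : Prop :=
  cand p q r /\ forall c, cand p q c -> r <= c.

Definition geodesic (gam : R -> pt) (L : R) (p q : pt) : Prop :=
  0 <= L /\
  (forall s, 0 <= s <= L -> valid (gam s)) /\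
  pdist (gam 0) p 0 /\ pdist (gam L) q 0 /\
  (forall s s', 0 <= s <= L -> 0 <= s' <= L ->
     pdist (gam s) (gam s') (Rabs (s - s'))).

Definition side_thin (delta : R) (g1 : R -> pt) (L1 : R)
    (g2 : R -> pt) (L2 : R) (g3 : R -> pt) (L3 : R) : Prop :=
  forall s, 0 <= s <= L1 ->
    (exists s', 0 <= s' <= L2 /\ exists r, pdist (g1 s) (g2 s') r /\ r <= delta) \/
    (exists s', 0 <= s' <= L3 /\ exists r, pdist (g1 s) (g3 s') r /\ r <= delta).

Definition hyperbolic (delta : R) : Prop :=
  forall (x y z : pt) (g1 g2 g3 : R -> pt) (L1 L2 L3 : R),
    valid x -> valid y -> valid z ->
    geodesic g1 L1 x y -> geodesic g2 L2 y z -> geodesic g3 L3 z x ->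
    side_thin delta g1 L1 g2 L2 g3 L3 /\
    side_thin delta g2 L2 g3 L3 g1 L1 /\
    side_thin delta g3 L3 g1 L1 g2 L2.

(* s_p ... s_q for 1 <= p <= q <= length l (1-based indices) *)
Definition seg (l : list G) (p q : nat) : list G :=
  firstn (q - p + 1) (skipn (p - 1) l).

Definition simple_rel (l : list G) : Prop :=
  (2 < length l)%nat /\ Forall Spm l /\ gprod l = gone G /\
  forall p q, (1 <= p)%nat -> (p <= q)%nat -> (q <= length l)%nat ->
    (gprod (seg l p q) = gone G <-> (p = 1%nat /\ q = length l)).

Definition chordal (i0 k : R) : Prop :=
  forall l : list G, simple_rel l -> k <= INR (length l) ->
    exists i j : nat,
      (1 <= i)%nat /\ INR i <= i0 /\ (i < j)%nat /\ (j <= length l)%nat /\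
      exists l' : list G, Forall Spm l' /\
        gprod (seg l i j) = gprod l' /\
        (* r <= min (j - i, n - j + i - 2) *)
        (length l' + i <= j)%nat /\ (length l' + 2 + j <= length l + i)%nat.

End Cayley.

(* Main.v *)
Require Import Defs.
From Stdlib Require Import Reals List Lia Lra ZArith Classical.
Open Scope R_scope.

Lemma gmul_cancel {G : group} (x a b : G) : gmul G x a = gmul G x b -> a = b.
Proof. intro H. rewrite <- (gmul1l G a), <- (gmul1l G b), <- (gmulVl G x), <- !gmulA, H. reflexivity. Qed.

Lemma ginv_uniq {G : group} (x y : G) : gmul G x y = gone G -> y = ginv G x.
Proof. intro H. apply (gmul_cancel x). rewrite H, gmulVr. reflexivity. Qed.

Lemma ginv_inv {G : group} (x : G) : ginv G (ginv G x) = x.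
Proof. symmetry. apply ginv_uniq. apply gmulVl. Qed.

Lemma ginv_one {G : group} : ginv G (gone G) = gone G.
Proof. symmetry. apply ginv_uniq. apply gmul1l. Qed.

Lemma ginv_mul {G : group} (x y : G) : ginv G (gmul G x y) = gmul G (ginv G y) (ginv G x).
Proof. symmetry. apply ginv_uniq. rewrite !gmulA, <- (gmulA G x y), gmulVr, gmul1r, gmulVr. reflexivity. Qed.

Lemma gprod_app {G : group} (l1 l2 : list G) : gprod G (l1 ++ l2) = gmul G (gprod G l1) (gprod G l2).
Proof. induction l1; simpl. rewrite gmul1l; auto. unfold gprod in *. simpl. rewrite IHl1, gmulA. auto. Qed.

Definition winv {G : group} (l : list G) : list G := rev (map (ginv G) l).

Lemma gprod_winv {G : group} (l : list G) : gprod G (winv l) = ginv G (gprod G l).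
Proof. induction l; unfold winv in *; simpl. rewrite ginv_one; auto.
  rewrite gprod_app, IHl. unfold gprod at 2. simpl. rewrite gmul1r.
  change (fold_right (gmul G) (gone G) l) with (gprod G l). rewrite ginv_mul. auto. Qed.

Lemma length_winv {G : group} (l : list G) : length (winv l) = length l.
Proof. unfold winv. rewrite length_rev, length_map. auto. Qed.

Lemma Spm_inv {G : group} (S : list G) s : Spm G S s -> Spm G S (ginv G s).
Proof. intros [H H2]; split. destruct H as [H|H]. right; rewrite ginv_inv; auto. left; auto.
  intro E; apply H2. rewrite <- (ginv_inv s), E, ginv_one; auto. Qed.

Lemma Forall_winv {G : group} (S : list G) l : Forall (Spm G S) l -> Forall (Spm G S) (winv l).
Proof. intro H. unfold winv. apply Forall_rev. apply Forall_map. eapply Forall_impl; [|exact H]. apply Spm_inv. Qed.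

Lemma word_inv {G : group} (x y : G) l : gmul G x (gprod G l) = y -> gmul G y (gprod G (winv l)) = x.
Proof. intro H. rewrite gprod_winv, <- H, <- gmulA, gmulVr, gmul1r. auto. Qed.

Lemma wdist_sym {G : group} (S : list G) x y d : wdist G S x y d -> wdist G S y x d.
Proof. intros [[l [H1 [H2 H3]]] H4]. split.
  exists (winv l). rewrite length_winv. split; auto. split. apply Forall_winv; auto. apply word_inv; auto.
  intros l' F E. rewrite <- (length_winv l'). apply H4. apply Forall_winv; auto. apply word_inv; auto. Qed.

Lemma wdist_refl {G : group} (S : list G) x : wdist G S x x 0.
Proof. split. exists nil. split; auto. split; auto. simpl. unfold gprod; simpl. apply gmul1r. intros; lia. Qed.

Lemma cand_sym {G : group} (S : list G) p q c : cand G S p q c -> cand G S q p c.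
Proof. intros [[a [b [t [a' [b' [u [-> [-> H]]]]]]]] | [x [al [y [be [n [H1 [H2 [H3 ->]]]]]]]]].
  - left. exists a', b', u, a, b, t. split; auto. split; auto.
    destruct H as [[-> [-> ->]]|[-> [-> ->]]]. left; split; auto; split; auto. apply Rabs_minus_sym.
    right. split; auto. split; auto. unfold Rabs. repeat destruct Rcase_abs; lra.
  - right. exists y, be, x, al, n. split; auto. split; auto. split. apply wdist_sym; auto. ring. Qed.

Lemma pdist_sym {G : group} (S : list G) p q r : pdist G S p q r -> pdist G S q p r.
Proof. intros [H1 H2]. split. apply cand_sym; auto. intros c Hc. apply H2. apply cand_sym; auto. Qed.

Lemma pdist_VV {G : group} (S : list G) x : pdist G S (V G x) (V G x) 0.
Proof. split. right. exists x, 0, x, 0, 0%nat. split. simpl; auto. split. simpl; auto. split. apply wdist_refl. simpl; ring.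
  intros c [[a [b [t [a' [b' [u [H _]]]]]]]|[x0 [al [y [be [n [[_ ->] [[_ ->] [_ ->]]]]]]]]]. discriminate.
  pose proof (pos_INR n). lra. Qed.

Lemma Rabs_tri3 a b c d : Rabs (a - d) <= Rabs (a - b) + Rabs (b - c) + Rabs (c - d).
Proof. unfold Rabs; repeat destruct Rcase_abs; lra. Qed.

Definition fl (s : R) : nat := Z.to_nat (Int_part s).

Lemma fl_spec s : 0 <= s -> INR (fl s) <= s < INR (fl s) + 1.
Proof. intro H. destruct (base_Int_part s) as [H1 H2].
  assert (Hz : (0 <= Int_part s)%Z).
  { assert (IZR (-1) < IZR (Int_part s)) by (simpl; lra). apply lt_IZR in H0. lia. }
  unfold fl. rewrite INR_IZR_INZ, Z2Nat.id by exact Hz. lra. Qed.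

Lemma fl_unique s k : INR k <= s < INR k + 1 -> fl s = k.
Proof. intros [H1 H2]. assert (H0 : 0 <= s) by (pose proof (pos_INR k); lra).
  destruct (fl_spec s H0) as [H3 H4].
  destruct (Nat.lt_trichotomy (fl s) k) as [Hl|[He|Hl]]; auto.
  - apply le_INR in Hl. rewrite S_INR in Hl. lra.
  - apply le_INR in Hl. rewrite S_INR in Hl. lra. Qed.

Definition pos {G : group} (w : nat -> G) (s : R) : pt G :=
  if Req_EM_T s (INR (fl s)) then V G (w (fl s))
  else E G (w (fl s)) (w (S (fl s))) (s - INR (fl s)).

Lemma fl_INR k : fl (INR k) = k.
Proof. apply fl_unique. lra. Qed.

Lemma pos_at_INR {G : group} (w : nat -> G) k : pos w (INR k) = V G (w k).
Proof. unfold pos. rewrite fl_INR. destruct (Req_EM_T (INR k) (INR k)); [auto|lra]. Qed.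

Lemma pos_cases {G : group} (w : nat -> G) s : 0 <= s ->
  (s = INR (fl s) /\ pos w s = V G (w (fl s))) \/
  (INR (fl s) < s < INR (fl s) + 1 /\ pos w s = E G (w (fl s)) (w (S (fl s))) (s - INR (fl s))).
Proof. intro H. pose proof (fl_spec s H). unfold pos. destruct (Req_EM_T s (INR (fl s))).
  left; auto. right; split; auto. lra. Qed.

Lemma fl_lt s (L : nat) : INR (fl s) < s -> s <= INR L -> (fl s < L)%nat.
Proof. intros H1 H2. destruct (Nat.lt_ge_cases (fl s) L); auto. apply le_INR in H. lra. Qed.

Lemma fl_le s (L : nat) : 0 <= s -> s <= INR L -> (fl s <= L)%nat.
Proof. intros H1 H2. pose proof (fl_spec s H1). destruct (Nat.le_gt_cases (fl s) L); auto.
  apply le_INR in H0. rewrite S_INR in H0. lra. Qed.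

Lemma endp_pos {G : group} (w : nat -> G) (L : nat) s x al : 0 <= s <= INR L ->
  endp G (pos w s) x al -> exists i, (i <= L)%nat /\ x = w i /\ al = Rabs (s - INR i).
Proof. intros Hs He. destruct (pos_cases w s (proj1 Hs)) as [[H1 H2]|[H1 H2]]; rewrite H2 in He; simpl in He.
  - destruct He as [-> ->]. exists (fl s). split. apply fl_le; lra. split; auto. rewrite <- H1. unfold Rminus. rewrite Rplus_opp_r, Rabs_R0. auto.
  - assert (Hk := fl_lt s L (proj1 H1) (proj2 Hs)).
    destruct He as [[-> ->]|[-> ->]].
    + exists (fl s). split. lia. split; auto. rewrite Rabs_right; lra.
    + exists (S (fl s)). split. lia. split; auto. rewrite S_INR. rewrite Rabs_left; lra. Qed.


Lemma geod_arc {G : group} (Sg : list G) (w : nat -> G) (L : nat)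
 (HE: forall k, (k < L)%nat -> Spm G Sg (gmul G (ginv G (w k)) (w (S k))))
 (HW: forall a b, (a <= b <= L)%nat -> wdist G Sg (w a) (w b) (b - a)) :
 geodesic G Sg (pos w) (INR L) (V G (w 0%nat)) (V G (w L)).
Proof.
  assert (Hinj : forall a b, (a <= L)%nat -> (b <= L)%nat -> w a = w b -> a = b).
  { intros a b Ha Hb Hab. destruct (Nat.le_ge_cases a b).
    - destruct (HW a b (conj H Hb)) as [_ H2]. assert (H3 := H2 nil (Forall_nil _)). simpl in H3.
      unfold gprod in H3; simpl in H3. rewrite gmul1r in H3. specialize (H3 Hab). lia.
    - destruct (HW b a (conj H Ha)) as [_ H2]. assert (H3 := H2 nil (Forall_nil _)). simpl in H3.
      unfold gprod in H3; simpl in H3. rewrite gmul1r in H3. specialize (H3 (eq_sym Hab)). lia. }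
  assert (Hd : forall i j d, (i <= L)%nat -> (j <= L)%nat -> wdist G Sg (w i) (w j) d ->
             Rabs (INR i - INR j) <= INR d).
  { intros i j d Hi Hj Hw. destruct (Nat.le_ge_cases i j).
    - destruct Hw as [[l [Hl [Hf He]]] _]. destruct (HW i j (conj H Hj)) as [_ H2].
      specialize (H2 l Hf He). rewrite Rabs_left1. apply le_INR in H2. rewrite minus_INR in H2 by lia. subst; lra.
      apply le_INR in H; lra.
    - apply wdist_sym in Hw. destruct Hw as [[l [Hl [Hf He]]] _]. destruct (HW j i (conj H Hi)) as [_ H2].
      specialize (H2 l Hf He). rewrite Rabs_right. apply le_INR in H2. rewrite minus_INR in H2 by lia. subst; lra.
      apply le_INR in H; lra. }
  assert (Hlb : forall s s' c, 0 <= s <= INR L -> 0 <= s' <= INR L -> cand G Sg (pos w s) (pos w s') c -> Rabs (s - s') <= c).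
  { intros s s' c Hs Hs' [[a [b [t [a' [b' [u [E1 [E2 H]]]]]]]]|[x [al [y [be [n [H1 [H2 [H3 ->]]]]]]]]].
    - destruct (pos_cases w s (proj1 Hs)) as [[_ P]|[P1 P]]; rewrite P in E1; [discriminate|].
      destruct (pos_cases w s' (proj1 Hs')) as [[_ P']|[P1' P']]; rewrite P' in E2; [discriminate|].
      injection E1; injection E2; intros; subst.
      assert (K := fl_lt s L (proj1 P1) (proj2 Hs)). assert (K' := fl_lt s' L (proj1 P1') (proj2 Hs')).
      destruct H as [[Ha [Hb ->]]|[Ha [Hb ->]]].
      + apply Hinj in Ha; try lia. rewrite Ha. right. f_equal. ring.
      + apply Hinj in Ha; try lia. apply Hinj in Hb; try lia.
    - destruct (endp_pos w L s x al Hs H1) as [i [Hi [-> ->]]].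
      destruct (endp_pos w L s' y be Hs' H2) as [j [Hj [-> ->]]].
      pose proof (Hd i j n Hi Hj H3). pose proof (Rabs_tri3 s (INR i) (INR j) s'). rewrite (Rabs_minus_sym (INR j)) in H0. lra. }
  assert (Hub : forall s s', 0 <= s <= s' -> s' <= INR L -> cand G Sg (pos w s) (pos w s') (Rabs (s - s'))).
  { intros s s' Hss Hs'.
    rewrite Rabs_left1 by lra.
    destruct (pos_cases w s (proj1 Hss)) as [[P1 P]|[P1 P]];
    destruct (pos_cases w s' ltac:(lra)) as [[P1' P']|[P1' P']]; rewrite P, P'.
    - assert (fl s <= fl s')%nat. { destruct (Nat.le_gt_cases (fl s) (fl s')); auto. apply le_INR in H. rewrite S_INR in H. lra. }
      right. exists (w (fl s)), 0, (w (fl s')), 0, (fl s' - fl s)%nat. split. simpl; auto. split. simpl; auto.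
      split. apply HW. split; auto. apply fl_le; lra. rewrite minus_INR by auto. lra.
    - assert (fl s <= fl s')%nat. { destruct (Nat.le_gt_cases (fl s) (fl s')); auto. apply le_INR in H. rewrite S_INR in H. lra. }
      assert (fl s' <= L)%nat by (apply fl_le; lra).
      right. exists (w (fl s)), 0, (w (fl s')), (s' - INR (fl s')), (fl s' - fl s)%nat. split. simpl; auto. split. simpl; auto.
      split. apply HW. lia. rewrite minus_INR by auto. lra.
    - destruct (Nat.eq_dec (fl s) (fl s')) as [Heq|Hne].
      { exfalso. rewrite <- Heq in P1'. lra. }
      assert (S (fl s) <= fl s')%nat. { destruct (Nat.le_gt_cases (S (fl s)) (fl s')); auto.
        assert (fl s' < fl s)%nat by lia. apply le_INR in H0. rewrite S_INR in H0. lra. }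
      assert (fl s' <= L)%nat by (apply fl_le; lra).
      right. exists (w (S (fl s))), (1 - (s - INR (fl s))), (w (fl s')), 0, (fl s' - S (fl s))%nat.
      split. simpl; auto. split. simpl; auto.
      split. apply HW. lia. rewrite minus_INR by auto. rewrite S_INR. lra.
    - destruct (Nat.eq_dec (fl s) (fl s')) as [Heq|Hne].
      { left. exists (w (fl s)), (w (S (fl s))), (s - INR (fl s)), (w (fl s')), (w (S (fl s'))), (s' - INR (fl s')).
        split; auto. split; auto. left. rewrite Heq in *. split; auto. split; auto. rewrite Rabs_left1; lra. }
      assert (S (fl s) <= fl s')%nat. { destruct (Nat.le_gt_cases (S (fl s)) (fl s')); auto.
        assert (fl s' < fl s)%nat by lia. apply le_INR in H0. rewrite S_INR in H0. lra. }
      assert (fl s' <= L)%nat by (apply fl_le; lra).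
      right. exists (w (S (fl s))), (1 - (s - INR (fl s))), (w (fl s')), (s' - INR (fl s')), (fl s' - S (fl s))%nat.
      split. simpl; auto. split. simpl; auto.
      split. apply HW. lia. rewrite minus_INR by auto. rewrite S_INR. lra. }
  split. apply pos_INR.
  split. intros s Hs. destruct (pos_cases w s (proj1 Hs)) as [[_ P]|[P1 P]]; rewrite P; simpl; auto.
    split. apply HE. apply fl_lt; lra. lra.
  split. change (pos w 0) with (pos w (INR 0)). rewrite pos_at_INR. apply pdist_VV.
  split. rewrite pos_at_INR. apply pdist_VV.
  intros s s' Hs Hs'. destruct (Rle_dec s s').
  - split. apply Hub; lra. intros; apply Hlb; auto.
  - split. rewrite Rabs_minus_sym. apply cand_sym. apply Hub; lra. intros; apply Hlb; auto.
Qed.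

Definition pre {G : group} (l : list G) (k : nat) : G := gprod G (firstn k l).

Lemma Forall_firstn' {A} (P : A -> Prop) l k : Forall P l -> Forall P (firstn k l).
Proof. revert k; induction l; intros k H; destruct k; simpl; auto. inversion H; subst. constructor; auto. Qed.

Lemma Forall_skipn' {A} (P : A -> Prop) l k : Forall P l -> Forall P (skipn k l).
Proof. revert k; induction l; intros k H; destruct k; simpl; auto. inversion H; subst. auto. Qed.

Lemma gsplit {G : group} (l : list G) k j : (k <= j)%nat -> (k <= length l)%nat ->
  gmul G (pre l k) (gprod G (firstn (j - k) (skipn k l))) = pre l j.
Proof. intros H1 H2. unfold pre. rewrite <- gprod_app. f_equal.
  rewrite <- (firstn_skipn k l) at 3. rewrite firstn_app, firstn_firstn, firstn_length_le by auto.
  f_equal. f_equal. lia. Qed.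

Lemma seg_eq {G : group} (l : list G) i j : (1 <= i)%nat -> (i <= j)%nat ->
  seg G l i j = firstn (j - (i - 1)) (skipn (i - 1) l).
Proof. intros. unfold seg. f_equal. lia. Qed.

Lemma edge {G : group} (Sg : list G) (l : list G) k : (k < length l)%nat -> Forall (Spm G Sg) l ->
  Spm G Sg (gmul G (ginv G (pre l k)) (pre l (Datatypes.S k))).
Proof. intros Hk Hf. rewrite <- (gsplit l k (Datatypes.S k)) by lia.
  replace (Datatypes.S k - k)%nat with 1%nat by lia.
  assert (Hs := Forall_skipn' _ l k Hf). assert (Hl := length_skipn k l).
  destruct (skipn k l) as [|a r]. simpl in Hl; lia.
  simpl. unfold gprod; simpl. rewrite gmul1r, gmulA, gmulVl, gmul1l. inversion Hs; auto. Qed.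


Definition NCm (G : group) (Sg : list G) (l : list G) (m : nat) : Prop :=
  forall i j l', (1 <= i)%nat -> (i <= Datatypes.S m)%nat -> (i < j)%nat -> (j <= length l)%nat ->
    Forall (Spm G Sg) l' -> gprod G (seg G l i j) = gprod G l' ->
    (length l' + i <= j)%nat -> (length l' + 2 + j <= length l + i)%nat -> False.

Lemma pre_n {G : group} (Sg l : list G) : simple_rel G Sg l -> pre l (length l) = gone G.
Proof. intros [_ [_ [H _]]]. unfold pre. rewrite firstn_all. auto. Qed.

Lemma pre_0 {G : group} (l : list G) : pre l 0 = gone G.
Proof. reflexivity. Qed.

Lemma F0 {G : group} (Sg l : list G) m x y l' : simple_rel G Sg l -> NCm G Sg l m ->
  (x <= m)%nat -> (x <= y)%nat -> (y <= length l)%nat -> Forall (Spm G Sg) l' ->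
  gmul G (pre l x) (gprod G l') = pre l y -> (Nat.min (y - x) (length l - (y - x)) <= length l')%nat.
Proof. intros Hs NC Hx Hxy Hy Hf He. pose proof Hs as [Hn3 [Hfl _]].
  destruct (Nat.eq_dec y x) as [->|Hne]. lia.
  destruct (Nat.eq_dec y (Datatypes.S x)) as [->|Hne2].
  - destruct l' as [|a r]. 2: (change (length (a :: r)) with (Datatypes.S (length r)); lia). exfalso.
    pose proof (edge Sg l x ltac:(lia) Hfl) as HE. simpl in He. unfold gprod in He; simpl in He.
    rewrite gmul1r in He. rewrite <- He, gmulVl in HE. destruct HE as [_ HE]. auto.
  - destruct (le_dec (length l' + Datatypes.S x) y); destruct (le_dec (length l' + 2 + y) (length l + Datatypes.S x)); try lia.
    exfalso. apply (NC (Datatypes.S x) y l'); auto; try lia.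
    rewrite seg_eq by lia. replace (Datatypes.S x - 1)%nat with x by lia.
    apply (gmul_cancel (pre l x)). rewrite gsplit by lia. auto. Qed.

Lemma Fg {G : group} (Sg l : list G) m x y l' : simple_rel G Sg l -> NCm G Sg l m ->
  (x <= length l)%nat -> (y <= length l)%nat -> (x <= m \/ y <= m)%nat -> Forall (Spm G Sg) l' ->
  gmul G (pre l x) (gprod G l') = pre l y ->
  (Nat.min (x - y + (y - x)) (length l - (x - y + (y - x))) <= length l')%nat.
Proof. intros Hs NC Hx Hy Hm Hf He. destruct (Nat.le_ge_cases x y).
  - replace (x - y + (y - x))%nat with (y - x)%nat by lia. apply (F0 Sg l m x y l' Hs NC); auto; lia.
  - replace (x - y + (y - x))%nat with (x - y)%nat by lia. rewrite <- (length_winv l').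
    apply (F0 Sg l m y x (winv l') Hs NC); try lia. apply Forall_winv; auto. apply word_inv; auto. Qed.

Lemma Fnil {G : group} (Sg l : list G) m x y : simple_rel G Sg l -> NCm G Sg l m ->
  (x <= length l)%nat -> (y <= length l)%nat -> (x <= m \/ y <= m)%nat -> pre l x = pre l y ->
  (Nat.min (x - y + (y - x)) (length l - (x - y + (y - x))) = 0)%nat.
Proof. intros. assert (H5 := Fg Sg l m x y nil H H0 H1 H2 H3 (Forall_nil _)). simpl in H5.
  unfold gprod in H5; simpl in H5. rewrite gmul1r in H5. specialize (H5 H4). lia. Qed.

Lemma arc_HE {G : group} (Sg l : list G) lo L : Forall (Spm G Sg) l -> (lo + L <= length l)%nat ->
  forall k, (k < L)%nat -> Spm G Sg (gmul G (ginv G ((fun k => pre l (lo + k)) k)) ((fun k => pre l (lo + k)) (Datatypes.S k))).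
Proof. intros Hf HL k Hk. simpl. rewrite Nat.add_succ_r. apply edge; auto. lia. Qed.

Lemma arc_HW {G : group} (Sg l : list G) lo L : Forall (Spm G Sg) l -> (lo + L <= length l)%nat ->
  (forall p q l', (lo <= p)%nat -> (p <= q)%nat -> (q <= lo + L)%nat -> Forall (Spm G Sg) l' ->
     gmul G (pre l p) (gprod G l') = pre l q -> (q - p <= length l')%nat) ->
  forall a b, (a <= b <= L)%nat -> wdist G Sg ((fun k => pre l (lo + k)) a) ((fun k => pre l (lo + k)) b) (b - a).
Proof. intros Hf HL LB a b Hab. simpl. split.
  - exists (firstn (b - a) (skipn (lo + a) l)). split. apply firstn_length_le. rewrite length_skipn. lia.
    split. apply Forall_firstn', Forall_skipn'; auto.
    replace (b - a)%nat with ((lo + b) - (lo + a))%nat by lia. apply gsplit; lia.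
  - intros l' Hf' He. replace (b - a)%nat with ((lo + b) - (lo + a))%nat by lia. apply LB; auto; lia. Qed.

Lemma LB_good {G : group} (Sg l : list G) m lo L : simple_rel G Sg l -> NCm G Sg l m ->
  (lo <= m)%nat -> (lo + L <= length l)%nat -> (2 * L <= length l)%nat ->
  forall p q l', (lo <= p)%nat -> (p <= q)%nat -> (q <= lo + L)%nat -> Forall (Spm G Sg) l' ->
     gmul G (pre l p) (gprod G l') = pre l q -> (q - p <= length l')%nat.
Proof. intros Hs NC Hlo HL H2L p q l' H1 H2 H3 Hf He. pose proof Hs as [_ [Hfl _]].
  set (u := firstn (p - lo) (skipn lo l)).
  assert (Hu : length u = (p - lo)%nat). { apply firstn_length_le. rewrite length_skipn. lia. }
  assert (Hfu : Forall (Spm G Sg) u) by (apply Forall_firstn', Forall_skipn'; auto).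
  assert (He2 : gmul G (pre l lo) (gprod G (u ++ l')) = pre l q).
  { rewrite gprod_app, gmulA. unfold u. rewrite gsplit by lia. auto. }
  assert (K := Fg Sg l m lo q (u ++ l') Hs NC ltac:(lia) ltac:(lia) ltac:(lia) ltac:(apply Forall_app; auto) He2).
  rewrite length_app in K. lia. Qed.

Lemma LB_last {G : group} (Sg l : list G) m lo L : simple_rel G Sg l -> NCm G Sg l m ->
  (lo + L = length l)%nat -> (2 * L <= length l)%nat ->
  forall p q l', (lo <= p)%nat -> (p <= q)%nat -> (q <= lo + L)%nat -> Forall (Spm G Sg) l' ->
     gmul G (pre l p) (gprod G l') = pre l q -> (q - p <= length l')%nat.
Proof. intros Hs NC HL H2L p q l' H1 H2 H3 Hf He. pose proof Hs as [_ [Hfl _]].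
  set (v := firstn (length l - q) (skipn q l)).
  assert (Hv : length v = (length l - q)%nat). { apply firstn_length_le. rewrite length_skipn. lia. }
  assert (Hfv : Forall (Spm G Sg) v) by (apply Forall_firstn', Forall_skipn'; auto).
  assert (He2 : gmul G (pre l p) (gprod G (l' ++ v)) = pre l 0).
  { rewrite gprod_app, gmulA, He. unfold v. rewrite gsplit by lia. rewrite (pre_n Sg l Hs). auto. }
  assert (K := Fg Sg l m p 0 (l' ++ v) Hs NC ltac:(lia) ltac:(lia) ltac:(lia) ltac:(apply Forall_app; auto) He2).
  rewrite length_app in K. lia. Qed.

Lemma far {G : group} (Sg l : list G) m lo Lj p s' c : simple_rel G Sg l -> NCm G Sg l m ->
  (m <= lo)%nat -> (lo + Lj <= length l)%nat -> 0 <= p <= INR m -> 0 <= s' <= INR Lj ->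
  cand G Sg (pos (fun k => pre l (0 + k)) p) (pos (fun k => pre l (lo + k)) s') c ->
  c >= INR lo + s' - p \/ c >= INR (length l) - (INR lo + s') + p.
Proof. intros Hs NC Hm HL Hp Hs' Hc. pose proof Hs as [Hn3 [Hfl _]].
  destruct Hc as [[a0 [b0 [t [a' [b' [u [E1 [E2 H]]]]]]]]|[x [al [y [be [d [H1 [H2 [H3 ->]]]]]]]]].
  - exfalso.
    destruct (pos_cases (fun k => pre l (0 + k)) p (proj1 Hp)) as [[_ P]|[P1 P]]; rewrite P in E1; [discriminate|].
    destruct (pos_cases (fun k => pre l (lo + k)) s' (proj1 Hs')) as [[_ P']|[P1' P']]; rewrite P' in E2; [discriminate|].
    injection E1; injection E2; intros; subst.
    assert (Ka := fl_lt p m (proj1 P1) (proj2 Hp)). assert (Kb := fl_lt s' Lj (proj1 P1') (proj2 Hs')).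
    destruct H as [[Ha [Hb _]]|[Ha [Hb _]]].
    + pose proof (fun h1 h2 h3 => Fnil Sg l m _ _ Hs NC h1 h2 h3 Ha) as K. specialize (K ltac:(lia) ltac:(lia) ltac:(lia)). lia.
    + pose proof (fun h1 h2 h3 => Fnil Sg l m _ _ Hs NC h1 h2 h3 Hb) as K. specialize (K ltac:(lia) ltac:(lia) ltac:(lia)).
      pose proof (fun h1 h2 h3 => Fnil Sg l m _ _ Hs NC h1 h2 h3 Ha) as K2. specialize (K2 ltac:(lia) ltac:(lia) ltac:(lia)). lia.
  - destruct (endp_pos _ m p x al Hp H1) as [i [Hi [-> ->]]].
    destruct (endp_pos _ Lj s' y be Hs' H2) as [j [Hj [-> ->]]].
    destruct H3 as [[l0 [Hl0 [Hf0 He0]]] _].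
    pose proof (fun h1 h2 h3 => Fg Sg l m _ _ l0 Hs NC h1 h2 h3 Hf0 He0) as K. specialize (K ltac:(lia) ltac:(lia) ltac:(lia)).
    assert (K2 : (lo + j <= d + i \/ length l + i <= d + (lo + j))%nat) by lia.
    destruct K2 as [K2|K2]; apply le_INR in K2; rewrite !plus_INR in K2; [left|right];
    unfold Rabs; repeat destruct Rcase_abs; lra. Qed.

Lemma delta_nonneg (G : group) (S : list G) delta : hyperbolic G S delta -> 0 <= delta.
Proof. intro H.
  assert (Hg : geodesic G S (fun _ => V G (gone G)) 0 (V G (gone G)) (V G (gone G))).
  { split. lra. split. intros; exact I. split. apply pdist_VV. split. apply pdist_VV.
    intros s s' Hs Hs'. replace (Rabs (s - s')) with 0. apply pdist_VV.
    replace s with 0 by lra. replace s' with 0 by lra. unfold Rminus. rewrite Rplus_opp_r, Rabs_R0. auto. }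
  destruct (H (V G (gone G)) (V G (gone G)) (V G (gone G)) _ _ _ 0 0 0 I I I Hg Hg Hg) as [T _].
  destruct (T 0 ltac:(lra)) as [[s' [_ [r [Hr Hrd]]]]|[s' [_ [r [Hr Hrd]]]]];
  destruct Hr as [Hr _]; destruct (pdist_VV S (gone G)) as [_ K]; specialize (K r Hr); lra. Qed.

Theorem corollary5 (G : group) (S : list G) (delta : R) :
  generates G S ->
  hyperbolic G S delta ->
  chordal G S (4 * delta + 2) (4 * delta + 3).
Proof.
  intros Hgen Hhyp. assert (Hd := delta_nonneg G S delta Hhyp). intros l Hs Hlen.
  apply NNPP. intro NC.
  pose proof Hs as [Hn3 [Hfl _]].
  destruct (archimed (2 * delta)) as [Z1 Z2].
  assert (Hz : (0 < up (2 * delta))%Z). { apply lt_IZR. simpl. lra. }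
  set (m := Z.to_nat (up (2 * delta))).
  assert (Hm : INR m = IZR (up (2 * delta))). { unfold m. rewrite INR_IZR_INZ, Z2Nat.id by lia. auto. }
  assert (NCm' : NCm G S l m).
  { intros i j l' H1 H2 H3 H4 H5 H6 H7 H8. apply NC. exists i, j. split; auto. split.
    apply le_INR in H2. rewrite S_INR in H2. lra. split; auto. split; auto. exists l'. auto. }
  set (n := length l) in *.
  assert (H2m : (2 * m < n)%nat). { apply INR_lt. rewrite mult_INR. simpl. lra. }
  assert (Hm1 : (0 < m)%nat). { apply INR_lt. simpl. lra. }
  set (c := (n - n / 2)%nat).
  assert (Hc1 : (2 * c <= n + 1)%nat) by (unfold c; pose proof (Nat.div_mod n 2 ltac:(lia)); pose proof (Nat.mod_upper_bound n 2 ltac:(lia)); lia).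
  assert (Hc2 : (n <= 2 * c)%nat) by (unfold c; pose proof (Nat.div_mod n 2 ltac:(lia)); lia).
  assert (Hmc : (m <= c)%nat) by lia.
  assert (Hcn : (c <= n)%nat) by lia.
  set (w1 := fun k => pre l (0 + k)).
  set (w2 := fun k => pre l (m + k)).
  set (w3 := fun k => pre l (c + k)).
  assert (G1 : geodesic G S (pos w1) (INR m) (V G (pre l 0)) (V G (pre l m))).
  { apply (geod_arc S w1 m). apply arc_HE; auto; lia.
    apply arc_HW; auto. lia. apply (LB_good S l m); auto; lia. }
  assert (G2 : geodesic G S (pos w2) (INR (c - m)) (V G (pre l m)) (V G (pre l c))).
  { assert (E1 : V G (pre l m) = V G (w2 0%nat)) by (unfold w2; rewrite Nat.add_0_r; auto).
    assert (E2 : V G (pre l c) = V G (w2 (c - m)%nat)) by (unfold w2; do 2 f_equal; lia).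
    rewrite E1, E2. apply geod_arc.
    apply arc_HE; auto; lia.
    apply arc_HW; auto. lia. apply (LB_good S l m); auto; lia. }
  assert (G3 : geodesic G S (pos w3) (INR (n - c)) (V G (pre l c)) (V G (pre l 0))).
  { assert (E1 : V G (pre l c) = V G (w3 0%nat)) by (unfold w3; rewrite Nat.add_0_r; auto).
    assert (E2 : V G (pre l 0) = V G (w3 (n - c)%nat)).
    { unfold w3. replace (c + (n - c))%nat with n by lia. unfold n. rewrite (pre_n S l Hs). auto. }
    rewrite E1, E2. apply geod_arc.
    apply arc_HE; auto; lia.
    apply arc_HW; auto. lia. apply (LB_last S l m); auto; lia. }
  destruct (Hhyp (V G (pre l 0)) (V G (pre l m)) (V G (pre l c)) _ _ _ _ _ _ I I I G1 G2 G3) as [T _].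
  assert (Hmpos : 0 < INR m) by lra.
  assert (HcI : INR m <= INR c /\ INR c <= INR n) by (split; apply le_INR; lia).
  destruct (T (INR m / 2) ltac:(lra)) as [[s' [Hs' [r [[Hr _] Hrd]]]]|[s' [Hs' [r [[Hr _] Hrd]]]]].
  - rewrite minus_INR in Hs' by assumption.
    assert (XX : (m + (c - m) <= length l)%nat) by (unfold n in *; clearbody c m; lia).
    assert (YY : (m <= m)%nat) by lia.
    assert (B1 : 0 <= INR m / 2 <= INR m) by lra.
    assert (B2 : 0 <= s' <= INR (c - m)) by (rewrite minus_INR by exact Hmc; lra).
    destruct (far S l m m (c - m) (INR m / 2) s' r Hs NCm' YY XX B1 B2 Hr); unfold n in *; lra.
  - rewrite minus_INR in Hs' by assumption.
    assert (XX : (c + (n - c) <= length l)%nat) by (unfold n in *; clearbody c m; lia).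
    assert (YY : (m <= c)%nat) by (unfold n in *; clearbody c m; lia).
    assert (B1 : 0 <= INR m / 2 <= INR m) by lra.
    assert (B2 : 0 <= s' <= INR (n - c)) by (rewrite minus_INR by exact Hcn; lra).
    destruct (far S l m c (n - c) (INR m / 2) s' r Hs NCm' YY XX B1 B2 Hr); unfold n in *; lra.
Qed.
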